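(* Let $A$ be a linearly ordered set. Then for all passable games $G,H$ over $A$, we have $G\lhd H$ or $H\le G$.
   Context: Games over a poset $A$ are defined inductively: for each $a\in A$ there is an atomic game $[a]$, which has no options; and if $L$ and $R$ are non-empty sets of games, then $\{L\mid R\}$ is a composite game with left options $L$ and right options $R$. The relations $\le$ and $\lhd$ are defined by simultaneous recursion: $G\le H$ iff (1) every left option $G^L$ of $G$ satisfies $G^L\lhd H$, (2) every right option $H^R$ of $H$ satisfies $G\lhd H^R$, and (3) if $G$ or $H$ is atomic then $G\lhd H$; and $G\lhd H$ iff (1) some right option $G^R$ of $G$ satisfies $G^R\le H$, or (2) some left option $H^L$ of $H$ satisfies $G\le H^L$, or (3) $G=[a]$, $H=[b]$ are atomic and $a\le b$. A game $G$ is passable if $G\lhd G$ and recursively all its options are passable. *)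

(* Defs.v *)
From mathcomp Require Import all_boot all_order.
Set Implicit Arguments. Unset Strict Implicit. Unset Printing Implicit Defensive.
Import Order.TTheory.
Local Open Scope order_scope.

(* A composite game {L | R} is given by two
   nonempty families of games L : I -> game A and R : J -> game A; the set of
   left (resp. right) options is the image of L (resp. R). *)
Inductive game (A : Type) : Type :=
| Atom (a : A)
| Comp (I : Type) (L : I -> game A) (J : Type) (R : J -> game A)
       (neI : inhabited I) (neJ : inhabited J).

Arguments Atom {A} a.

Definition is_atom {A} (G : game A) : Prop :=
  match G with Atom _ => True | _ => False end.

Definition left_opt {A} (X G : game A) : Prop :=
  match G with Atom _ => False | Comp _ L _ _ _ _ => exists i, L i = X end.

Definition right_opt {A} (X G : game A) : Prop :=
  match G with Atom _ => False | Comp _ _ _ R _ _ => exists j, R j = X end.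

Section Rel.
Context {d : Order.disp_t} {A : porderType d}.

(* The relations <= and <| defined by simultaneous (well-founded) recursion,
   presented as a mutual inductive definition (unique fixed point). *)
Inductive game_le : game A -> game A -> Prop :=
| game_le_intro (G H : game A) :
    (forall GL, left_opt GL G -> game_lhd GL H) ->
    (forall HR, right_opt HR H -> game_lhd G HR) ->
    (is_atom G \/ is_atom H -> game_lhd G H) ->
    game_le G H
with game_lhd : game A -> game A -> Prop :=
| game_lhd_R (G H GR : game A) : right_opt GR G -> game_le GR H -> game_lhd G H
| game_lhd_L (G H HL : game A) : left_opt HL H -> game_le G HL -> game_lhd G H
| game_lhd_atom (a b : A) : (a <= b)%O -> game_lhd (Atom a) (Atom b).

Fixpoint passable (G : game A) : Prop :=
  game_lhd G G /\
  match G with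
  | Atom _ => True
  | Comp _ L _ R _ _ => (forall i, passable (L i)) /\ (forall j, passable (R j))
  end.

End Rel.

(* Main.v *)
Require Import Defs.
From Stdlib Require Import Classical.
From mathcomp Require Import all_boot all_order.
Import Order.TTheory.


Set Implicit Arguments. Unset Strict Implicit.

Definition opt {A} (X G : game A) := left_opt X G \/ right_opt X G.

Lemma opt_ind A (P : game A -> Prop) :
  (forall G, (forall X, opt X G -> P X) -> P G) -> forall G, P G.
Proof.
move=> H; elim => [a|I L IHL J R IHR nI nJ]; apply H => X; rewrite /opt /=.
- by case.
- by case=> [[i <-]|[j <-]].
Qed.

Section S.
Context {d : Order.disp_t} {A : orderType d}.

Lemma le_inv (G H : game A) : game_le G H ->
  (forall GL, left_opt GL G -> game_lhd GL H) /\
  (forall HR, right_opt HR H -> game_lhd G HR) /\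
  (is_atom G \/ is_atom H -> game_lhd G H).
Proof. destruct 1; auto. Qed.

Lemma lhd_inv (G H : game A) : game_lhd G H ->
  (exists GR, right_opt GR G /\ game_le GR H) \/
  (exists HL, left_opt HL H /\ game_le G HL) \/
  (exists a b, G = Atom a /\ H = Atom b /\ (a <= b)%O).
Proof. destruct 1; eauto 10. Qed.

Lemma atom_le (a b : A) : (a <= b)%O -> game_le (Atom a) (Atom b).
Proof. move=> h; constructor => //= *; by [|apply: game_lhd_atom]. Qed.

Definition T (X Y Z : game A) :=
  (game_lhd X Y -> game_le Y Z -> game_lhd X Z) /\
  (game_le X Y -> game_lhd Y Z -> game_lhd X Z) /\
  (game_le X Y -> game_le Y Z -> game_le X Z).

Lemma trans X : forall Y Z, T X Y Z.
Proof.
elim/opt_ind: X => X IHX Y; elim/opt_ind: Y => Y IHY Z; elim/opt_ind: Z => Z IHZ.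
have T1 : game_lhd X Y -> game_le Y Z -> game_lhd X Z.
  move=> hXY hYZ; case: (lhd_inv hXY) => [[XR [rXR hle]]|[[YL [lYL hle]]|[a [b [eX [eY ab]]]]]].
  - eapply game_lhd_R; first exact rXR.
    exact: ((IHX XR (or_intror rXR) Y Z).2.2 hle hYZ).
  - have := (le_inv hYZ).1 _ lYL.
    exact: (IHY YL (or_introl lYL) Z).2.1 hle.
  - subst X Y.
    have hb := (le_inv hYZ).2.2 (or_introl I).
    case: (lhd_inv hb) => [[GR [[] _]]|[[ZL [lZL hle]]|[b' [c [eb [eZ bc]]]]]].
    + eapply game_lhd_L; first exact lZL.
      exact: (IHZ ZL (or_introl lZL)).2.2 (atom_le ab) hle.
    + have eb' : b = b' by case: eb.
      subst Z b'; apply: game_lhd_atom; exact: le_trans ab bc.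
have T2 : game_le X Y -> game_lhd Y Z -> game_lhd X Z.
  move=> hXY hYZ; case: (lhd_inv hYZ) => [[YR [rYR hle]]|[[ZL [lZL hle]]|[b [c [eY [eZ bc]]]]]].
  - have := (le_inv hXY).2.1 _ rYR.
    move=> h; exact: (IHY YR (or_intror rYR) Z).1 h hle.
  - eapply game_lhd_L; first exact lZL.
    exact: (IHZ ZL (or_introl lZL)).2.2 hXY hle.
  - subst Y Z.
    have hb := (le_inv hXY).2.2 (or_intror I).
    case: (lhd_inv hb) => [[XR [rXR hle]]|[[GL [[] _]]|[a [b' [eX [eb ab]]]]]].
    + eapply game_lhd_R; first exact rXR.
      exact: (IHX XR (or_intror rXR) (Atom b) (Atom c)).2.2 hle (atom_le bc).
    + have eb' : b' = b by case: eb.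
      subst X b'; apply: game_lhd_atom; exact: le_trans ab bc.
split; [exact T1|split; [exact T2|]].
move=> hXY hYZ; constructor.
- move=> XL lXL; have := (le_inv hXY).1 _ lXL.
  move=> h; exact: (IHX XL (or_introl lXL) Y Z).1 h hYZ.
- move=> ZR rZR; have := (le_inv hYZ).2.1 _ rZR.
  move=> h; exact: (IHZ ZR (or_intror rZR)).2.1 hXY h.
- case=> [aX|aZ].
  + exact: T1 ((le_inv hXY).2.2 (or_introl aX)) hYZ.
  + exact: T2 hXY ((le_inv hYZ).2.2 (or_intror aZ)).
Qed.

Definition Q (G H : game A) := game_lhd G H \/ game_le H G.

Lemma passable_opt (G X : game A) : passable G -> opt X G -> passable X.
Proof.
case: G => [a|I L J R nI nJ] /=; first by move=> _ [].
by move=> [_ [pL pR]] [[i <-]|[j <-]].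
Qed.

Lemma passable_lhd (G : game A) : passable G -> game_lhd G G.
Proof. by case: G => [a|I L J R nI nJ] /= []. Qed.

Lemma stepQ (G H : game A) (pG : game_lhd G G) (pH : game_lhd H H)
 (h1 : forall HL, left_opt HL H -> Q HL G)
 (h2 : forall GR, right_opt GR G -> Q H GR)
 (h3 : forall GL, left_opt GL G -> Q GL H)
 (h4 : forall HR, right_opt HR H -> Q G HR) : Q G H.
Proof.
case: (classic (game_lhd G H)) => [h|nh]; [by left|right].
constructor.
- move=> HL lHL; case: (h1 HL lHL) => // hle; exfalso; apply: nh.
  eapply game_lhd_L; eauto.
- move=> GR rGR; case: (h2 GR rGR) => // hle; exfalso; apply: nh.
  eapply game_lhd_R; eauto.
- move=> _.
  case: (lhd_inv pG) => [[GR [rGR hle]]|[[GL [lGL hle]]|[a [a' [eG [_ _]]]]]].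
  + case: (h2 GR rGR) => [hl|hle'].
    * exact: (trans H GR G).1 hl hle.
    * exfalso; apply: nh; eapply game_lhd_R; eauto.
  + case: (h3 GL lGL) => [hl|hle'].
    * exfalso; apply: nh; exact: (trans G GL H).2.1 hle hl.
    * eapply game_lhd_L; eauto.
  + case: (lhd_inv pH) => [[HR [rHR hle]]|[[HL [lHL hle]]|[b [b' [eH [_ _]]]]]].
    * case: (h4 HR rHR) => [hl|hle'].
      -- exfalso; apply: nh; exact: (trans G HR H).1 hl hle.
      -- eapply game_lhd_R; eauto.
    * case: (h1 HL lHL) => [hl|hle'].
      -- exact: (trans H HL G).2.1 hle hl.
      -- exfalso; apply: nh; eapply game_lhd_L; eauto.
    * subst G H; case/orP: (le_total a b) => ab.
      -- exfalso; apply: nh; exact: game_lhd_atom.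
      -- exact: game_lhd_atom.
Qed.

Lemma mainR (G : game A) : forall H, passable G -> passable H -> Q G H /\ Q H G.
Proof.
elim/opt_ind: G => G IHG H; elim/opt_ind: H => H IHH pG pH.
have oG : forall X, opt X G -> forall H, passable H -> Q X H /\ Q H X.
  move=> X oX H' pH'; exact: IHG X oX H' (passable_opt pG oX) pH'.
have oH : forall X, opt X H -> Q G X /\ Q X G.
  move=> X oX; exact: IHH X oX pG (passable_opt pH oX).
split.
- apply: stepQ; [exact: passable_lhd pG|exact: passable_lhd pH| | | |].
  + move=> X l; exact: (oH X (or_introl l)).2.
  + move=> X r; exact: (oG X (or_intror r) H pH).2.
  + move=> X l; exact: (oG X (or_introl l) H pH).1.
  + move=> X r; exact: (oH X (or_intror r)).1.
- apply: stepQ; [exact: passable_lhd pH|exact: passable_lhd pG| | | |].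
  + move=> X l; exact: (oG X (or_introl l) H pH).1.
  + move=> X r; exact: (oH X (or_intror r)).1.
  + move=> X l; exact: (oH X (or_introl l)).2.
  + move=> X r; exact: (oG X (or_intror r) H pH).2.
Qed.

End S.

Theorem lemma7p2 (d : Order.disp_t) (A : orderType d) (G H : game A) :
  passable G -> passable H -> game_lhd G H \/ game_le H G.
Proof. move=> pG pH; exact: (mainR pG pH).1. Qed.
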